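(* Let $G$ be a graph with vertex set $V$, each vertex carrying a finite-dimensional Hilbert space, let $\alpha$ be a QCA of range $R$, let $F\subseteq V$, and let $\mathcal{P}(\alpha,F)$ be the commutant of $\mathcal{A}(\mathrm{Int}(F))$ in $\alpha(\mathcal{A}(F))$. Then $\mathcal{P}(\alpha,F)$ is a $2R$-locally factorizable algebra.
   Context: For a set $S$ of sites, $\mathcal{A}(S)$ is the algebra of operators supported on $S$ (operators on $\bigotimes_{x\in S}\mathcal{H}_x$ tensored with the identity). A QCA of range $R$ is a $*$-automorphism $\alpha$ of the full operator algebra such that for each site $x$ and each $O$ supported on $\{x\}$, $\alpha(O)$ is supported on sites within graph distance $R$ of $x$. $\mathrm{Int}(F)=\{x: \text{all sites within distance } R \text{ of } x \text{ lie in } F\}$. An algebra $\mathcal{A}$ is $l$-locally factorizable if whenever $O\in\mathcal{A}$ is supported on $T_1\cup T_2$ with $T_1,T_2$ disjoint and $\mathrm{dist}(T_1,T_2)>l$, and $O=\sum_\beta A(\beta)O_1^\beta O_2^\beta$ is a singular value decomposition in the Hilbert–Schmidt inner product ($A(\beta)\ne0$, $O_i^\beta$ supported on $T_i$), then all $O_i^\beta\in\mathcal{A}$. *)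

(* Defs.v *)
From mathcomp Require Import all_boot all_algebra.
From mathcomp Require Import reals.
From mathcomp.real_closed Require Import complex.
Set Implicit Arguments. Unset Strict Implicit. Unset Printing Implicit Defensive.
Import GRing.Theory Num.Theory.
Local Open Scope ring_scope.

Fixpoint ball (V : finType) (e : rel V) (n : nat) (x : V) : {set V} :=
  match n with
  | 0 => [set x]
  | n'.+1 => ball e n' x :|: [set y | [exists z in ball e n' x, e z y]]
  end.

Definition setdist_gt (V : finType) (e : rel V) (l : nat) (T1 T2 : {set V}) : bool :=
  [forall x in T1, forall y in T2, y \notin ball e l x].

Definition interior (V : finType) (e : rel V) (r : nat) (F : {set V}) : {set V} :=
  [set x | ball e r x \subset F].

(* computational basis states of the full tensor product *)
Definition cfg (V : finType) (d : V -> nat) : finType :=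
  {dffun forall x : V, 'I_(d x)}.

(* operators on the full Hilbert space (matrices w.r.t. the product basis) *)
Definition op (V : finType) (d : V -> nat) (R : realType) :=
  'M[R[i]]_(#|{: cfg d}|).

Definition ent (V : finType) (d : V -> nat) (R : realType) (O : op d R)
  (s t : cfg d) : R[i] := O (enum_rank s) (enum_rank t).

Definition agree (V : finType) (d : V -> nat) (S : {set V}) (s t : cfg d) : bool :=
  [forall x in S, s x == t x].

(* O is supported on S, i.e. O = A (x) Id_{V \ S} with A an operator on
   the tensor product of the H_x, x in S: the entries are
   <s|O|t> = A(s|_S, t|_S) * delta(s|_{V\S}, t|_{V\S}). *)
Definition supported (V : finType) (d : V -> nat) (R : realType) (O : op d R)
  (S : {set V}) : Prop :=
  exists A : cfg d -> cfg d -> R[i],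
    (forall s t s' t', agree S s s' -> agree S t t' -> A s t = A s' t') /\
    (forall s t, ent O s t = if agree (~: S) s t then A s t else 0).

Definition adj (V : finType) (d : V -> nat) (R : realType) (O : op d R) : op d R :=
  (map_mx Num.conj O)^T.

Definition hs (V : finType) (d : V -> nat) (R : realType) (X Y : op d R) : R[i] :=
  \tr (adj X *m Y).

Definition star_aut (V : finType) (d : V -> nat) (R : realType)
  (alpha : op d R -> op d R) : Prop :=
  [/\ forall (a : R[i]) X Y, alpha (a *: X + Y) = a *: alpha X + alpha Y,
      forall X Y, alpha (X *m Y) = alpha X *m alpha Y,
      forall X, alpha (adj X) = adj (alpha X)
    & bijective alpha].

Definition QCA (V : finType) (e : rel V) (d : V -> nat) (R : realType) (r : nat)
  (alpha : op d R -> op d R) : Prop :=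
  star_aut alpha /\
  forall (x : V) (O : op d R), supported O [set x] -> supported (alpha O) (ball e r x).

Definition Palg (V : finType) (e : rel V) (d : V -> nat) (R : realType) (r : nat)
  (alpha : op d R -> op d R) (F : {set V}) (P : op d R) : Prop :=
  (exists O : op d R, supported O F /\ alpha O = P) /\
  (forall Q : op d R, supported Q (interior e r F) -> P *m Q = Q *m P).

Definition is_algebra (V : finType) (d : V -> nat) (R : realType)
  (Alg : op d R -> Prop) : Prop :=
  [/\ Alg 1%:M,
      forall (a : R[i]) X Y, Alg X -> Alg Y -> Alg (a *: X + Y)
    & forall X Y, Alg X -> Alg Y -> Alg (X *m Y)].

Definition locally_factorizable (V : finType) (e : rel V) (d : V -> nat)
  (R : realType) (l : nat) (Alg : op d R -> Prop) : Prop :=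
  forall (O : op d R), Alg O ->
  forall (T1 T2 : {set V}), [disjoint T1 & T2] -> setdist_gt e l T1 T2 ->
  supported O (T1 :|: T2) ->
  forall (k : nat) (A : 'I_k -> R[i]) (O1 O2 : 'I_k -> op d R),
    (* singular value decomposition in the Hilbert--Schmidt inner product *)
    (forall b, 0 < A b) ->
    (forall b b', hs (O1 b) (O1 b') = (b == b')%:R) ->
    (forall b b', hs (O2 b) (O2 b') = (b == b')%:R) ->
    (forall b, supported (O1 b) T1) ->
    (forall b, supported (O2 b) T2) ->
    O = \sum_(b < k) A b *: (O1 b *m O2 b) ->
    forall b, Alg (O1 b) /\ Alg (O2 b).

(* Main.v *)
Require Import Defs.
From mathcomp Require Import all_boot all_algebra.
From mathcomp Require Import reals.
From mathcomp.real_closed Require Import complex.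
Set Implicit Arguments. Unset Strict Implicit. Unset Printing Implicit Defensive.
Import GRing.Theory Num.Theory.
Local Open Scope ring_scope.
Definition mix {V : finType} {d : V -> nat} (S : {set V}) (s t : cfg d) : cfg d :=
  [ffun x => if x \in S then s x else t x].

Lemma mixE {V : finType} {d : V -> nat} (S : {set V}) (s t : cfg d) x :
  mix S s t x = if x \in S then s x else t x.
Proof. by rewrite /mix ffunE. Qed.

Lemma mixss {V : finType} {d : V -> nat} (S : {set V}) (s : cfg d) : mix S s s = s.
Proof. by apply/ffunP => x; rewrite mixE; case: ifP. Qed.

Lemma agreeP {V : finType} {d : V -> nat} (S : {set V}) (s t : cfg d) :
  reflect (forall x, x \in S -> s x = t x) (agree S s t).
Proof.
apply: (iffP forall_inP) => H x xS; first exact/eqP/H.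
by rewrite H.
Qed.

Lemma ent_ext {V : finType} {d : V -> nat} {R : realType} (X Y : op d R) :
  (forall s t, ent X s t = ent Y s t) -> X = Y.
Proof.
move=> H; apply/matrixP => i j; rewrite -(enum_valK i) -(enum_valK j); exact: H.
Qed.

Lemma ent_mul {V : finType} {d : V -> nat} {R : realType} (X Y : op d R) s t :
  ent (X *m Y) s t = \sum_(u : cfg d) ent X s u * ent Y u t.
Proof.
rewrite /ent mxE.
rewrite (reindex (@enum_rank (cfg d))) /=; last first.
  by exists enum_val => x _; rewrite ?enum_valK ?enum_rankK.
by apply: eq_bigr => u _.
Qed.

Lemma ent_scale {V : finType} {d : V -> nat} {R : realType} a (X : op d R) s t :
  ent (a *: X) s t = a * ent X s t.
Proof. by rewrite /ent mxE. Qed.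

Lemma ent_add {V : finType} {d : V -> nat} {R : realType} (X Y : op d R) s t :
  ent (X + Y) s t = ent X s t + ent Y s t.
Proof. by rewrite /ent mxE. Qed.

Lemma ent_opp {V : finType} {d : V -> nat} {R : realType} (X : op d R) s t :
  ent (- X) s t = - ent X s t.
Proof. by rewrite /ent mxE. Qed.

Lemma ent0 {V : finType} {d : V -> nat} {R : realType} s t :
  ent (0 : op d R) s t = 0.
Proof. by rewrite /ent mxE. Qed.

Lemma ent_sum {V : finType} {d : V -> nat} {R : realType} k (X : 'I_k -> op d R) s t :
  ent (\sum_(b < k) X b) s t = \sum_(b < k) ent (X b) s t.
Proof. by rewrite /ent summxE. Qed.

Lemma hs_sum {V : finType} {d : V -> nat} {R : realType} (X Y : op d R) :
  hs X Y = \sum_(u : cfg d) \sum_(v : cfg d) (ent X u v)^* * ent Y u v.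
Proof.
rewrite /hs /mxtrace exchange_big /=.
rewrite (reindex (@enum_rank (cfg d))) /=; last first.
  by exists enum_val => x _; rewrite ?enum_valK ?enum_rankK.
apply: eq_bigr => u _.
rewrite mxE (reindex (@enum_rank (cfg d))) /=; last first.
  by exists enum_val => x _; rewrite ?enum_valK ?enum_rankK.
by apply: eq_bigr => v _; rewrite /adj !mxE.
Qed.

Lemma ent_mul_disj {V : finType} {d : V -> nat} {R : realType} {C D : op d R}
  {S S' : {set V}} (s t : cfg d) :
  supported C S -> supported D S' -> [disjoint S & S'] ->
  ent (C *m D) s t = ent C s (mix S t s) * ent D (mix S t s) t.
Proof.
move=> [AC [_ hC]] [AD [_ hD]] dis.
rewrite ent_mul (bigD1 (mix S t s)) //= big1 ?addr0 // => u neq.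
rewrite hC hD.
case: (boolP (agree (~: S) s u)) => [/agreeP h1|]; last by rewrite mul0r.
case: (boolP (agree (~: S') u t)) => [/agreeP h2|]; last by rewrite mulr0.
exfalso; move/eqP: neq; apply; apply/ffunP => x; rewrite mixE.
case: ifP => xS.
- by apply: h2; rewrite in_setC (disjointFr dis xS).
- by rewrite h1 // in_setC xS.
Qed.

Lemma agree_mix {V : finType} {d : V -> nat} (S S' : {set V}) (s t : cfg d) :
  agree (~: S') (mix S t s) t = agree (~: (S :|: S')) s t.
Proof.
apply/agreeP/agreeP => h x.
- rewrite !inE negb_or => /andP [xS xS'].
  by have := h x; rewrite inE xS' mixE (negbTE xS) => ->.
- rewrite inE mixE => xS'; case: ifP => xS //.
  by apply: h; rewrite !inE xS.
Qed.

Lemma supp_disj_comm {V : finType} {d : V -> nat} {R : realType} (C D : op d R)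
  (S S' : {set V}) :
  supported C S -> supported D S' -> [disjoint S & S'] -> C *m D = D *m C.
Proof.
move=> hC hD dis; apply: ent_ext => s t.
rewrite (ent_mul_disj s t hC hD dis) (ent_mul_disj s t hD hC _); last by rewrite disjoint_sym.
case: hC => [AC [eC hC]]; case: hD => [AD [eD hD]].
rewrite !hC !hD !agree_mix setUC.
have a1 : agree (~: S) s (mix S t s).
  by apply/agreeP => x; rewrite inE mixE => /negbTE ->.
have a2 : agree (~: S') s (mix S' t s).
  by apply/agreeP => x; rewrite inE mixE => /negbTE ->.
rewrite a1 a2.
case: ifP => _; last by rewrite !mulr0.
have -> : AC s (mix S t s) = AC (mix S' t s) t.
  apply: eC; apply/agreeP => x xS; rewrite mixE.
    by rewrite (disjointFr dis xS).
  by rewrite xS.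
have -> : AD (mix S t s) t = AD s (mix S' t s).
  apply: eD; apply/agreeP => x xS; rewrite mixE.
    by rewrite (disjointFl dis xS).
  by rewrite xS.
by rewrite mulrC.
Qed.

Definition Emx {V : finType} {d : V -> nat} {R : realType} (y : V) (p q : cfg d) : op d R :=
  \matrix_(i, j) (if [&& (enum_val i : cfg d) y == p y, (enum_val j : cfg d) y == q y
     & agree (~: [set y]) (enum_val i) (enum_val j)] then 1 else 0).

Lemma ent_E {V : finType} {d : V -> nat} {R : realType} (y : V) (p q s t : cfg d) :
  ent (Emx (R := R) y p q) s t =
  if [&& s y == p y, t y == q y & agree (~: [set y]) s t] then 1 else 0.
Proof. by rewrite /ent /Emx mxE !enum_rankK. Qed.

Lemma E_supp {V : finType} {d : V -> nat} {R : realType} (y : V) (p q : cfg d) :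
  supported (Emx (R := R) y p q) [set y].
Proof.
exists (fun s t : cfg d => if (s y == p y) && (t y == q y) then (1 : R[i]) else 0); split.
- move=> s t s' t' /agreeP h1 /agreeP h2.
  by rewrite h1 ?h2 // inE.
- move=> s t; rewrite ent_E.
  by case: (s y == p y); case: (t y == q y); case: agree.
Qed.

Lemma ent_EX {V : finType} {d : V -> nat} {R : realType} (y : V) (p q : cfg d)
  (X : op d R) s t :
  ent (Emx y p q *m X) s t = if s y == p y then ent X (mix [set y] q s) t else 0.
Proof.
rewrite ent_mul (bigD1 (mix [set y] q s)) //= big1 ?addr0.
- have ag : agree (~: [set y]) s (mix [set y] q s).
    by apply/agreeP => x; rewrite !inE mixE inE => /negbTE ->.
  rewrite ent_E mixE inE eqxx eqxx ag /=.
  by case: (s y == p y); rewrite ?mul1r ?mul0r.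
- move=> u neq; rewrite ent_E.
  case: (boolP [&& _, _ & _]) => [/and3P [_ /eqP h2 /agreeP h3]|]; last by rewrite mul0r.
  exfalso; move/eqP: neq; apply; apply/ffunP => x; rewrite mixE inE.
  case: eqP => [->|/eqP ne] //.
  by rewrite h3 // !inE.
Qed.

Lemma ent_XE {V : finType} {d : V -> nat} {R : realType} (y : V) (p q : cfg d)
  (X : op d R) s t :
  ent (X *m Emx y p q) s t = if t y == q y then ent X s (mix [set y] p t) else 0.
Proof.
rewrite ent_mul (bigD1 (mix [set y] p t)) //= big1 ?addr0.
- have ag : agree (~: [set y]) (mix [set y] p t) t.
    by apply/agreeP => x; rewrite !inE mixE inE => /negbTE ->.
  rewrite ent_E mixE inE eqxx eqxx ag /= andbT.
  by case: (t y == q y); rewrite ?mulr1 ?mulr0.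
- move=> u neq; rewrite ent_E.
  case: (boolP [&& _, _ & _]) => [/and3P [/eqP h1 _ /agreeP h3]|]; last by rewrite mulr0.
  exfalso; move/eqP: neq; apply; apply/ffunP => x; rewrite mixE inE.
  case: eqP => [->|/eqP ne] //.
  by rewrite -h3 // !inE.
Qed.

Lemma commutant {V : finType} {d : V -> nat} {R : realType}
  (hd : forall x, (0 < d x)%N) (X : op d R) (S : {set V}) :
  (forall y, y \notin S -> forall p q : cfg d, X *m Emx y p q = Emx y p q *m X) ->
  supported X S.
Proof.
move=> H.
pose c : cfg d := [ffun x => Ordinal (hd x)].
have F1 : forall y (s t : cfg d), y \notin S -> s y != t y -> ent X s t = 0.
  move=> y s t yS ne.
  have := congr1 (fun M => ent M s t) (H y yS s s).
  by rewrite /= ent_XE ent_EX eq_sym (negbTE ne) eqxx mixss.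
have F2 : forall y (s t w : cfg d), y \notin S -> s y = t y ->
    ent X (mix [set y] w s) (mix [set y] w t) = ent X s t.
  move=> y s t w yS st.
  have := congr1 (fun M => ent M s (mix [set y] w t)) (H y yS s w).
  rewrite /= ent_XE ent_EX mixE inE !eqxx => <-.
  congr (ent X s _); apply/ffunP => x; rewrite !mixE inE.
  by case: eqP => [->|].
have claim : forall n (s t : cfg d),
    (#|[set x | (x \notin S) && (s x != c x)]| <= n)%N -> agree (~: S) s t ->
    ent X s t = ent X (mix S s c) (mix S t c).
  elim=> [|n IH] s t hn ag;
    case: (pickP [pred x | (x \notin S) && (s x != c x)]) => [y /andP [yS ysc]|none].
  - move: hn; rewrite leqn0 cards_eq0 => /eqP E.
    have : y \in [set x | (x \notin S) && (s x != c x)] by rewrite inE yS ysc.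
    by rewrite E inE.
  - have es : mix S s c = s.
      apply/ffunP => x; rewrite mixE; case: ifP => xS //.
      by have := none x; rewrite /= xS /= => /negbFE /eqP.
    have et : mix S t c = t.
      apply/ffunP => x; rewrite mixE; case: ifP => xS //.
      have := none x; rewrite /= xS /= => /negbFE /eqP <-.
      by move/agreeP: ag => <- //; rewrite inE xS.
    by rewrite es et.
  - have sty : s y = t y by move/agreeP: ag => ->; rewrite // inE.
    rewrite -(F2 y s t c yS sty).
    set s1 := mix [set y] c s; set t1 := mix [set y] c t.
    have -> : mix S s c = mix S s1 c.
      apply/ffunP => x; rewrite !mixE; case: ifP => xS //.
      rewrite inE; case: eqP => // xy.
      by move: yS; rewrite -xy xS.
    have -> : mix S t c = mix S t1 c.
      apply/ffunP => x; rewrite !mixE; case: ifP => xS //.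
      rewrite inE; case: eqP => // xy.
      by move: yS; rewrite -xy xS.
    apply: IH.
      have sub : [set x | (x \notin S) && (s1 x != c x)] \proper
                 [set x | (x \notin S) && (s x != c x)].
        apply/properP; split.
          apply/subsetP => x; rewrite !inE /s1 mixE inE.
          by case: (x =P y) => [->|_]; rewrite ?eqxx ?andbF.
        exists y; first by rewrite inE yS ysc.
        by rewrite inE /s1 mixE inE eqxx eqxx andbF.
      by rewrite -ltnS; apply: leq_trans (proper_card sub) hn.
    apply/agreeP => x xS; rewrite /s1 /t1 !mixE inE.
    case: eqP => // _; by move/agreeP: ag; apply.
  - have es : mix S s c = s.
      apply/ffunP => x; rewrite mixE; case: ifP => xS //.
      by have := none x; rewrite /= xS /= => /negbFE /eqP.
    have et : mix S t c = t.
      apply/ffunP => x; rewrite mixE; case: ifP => xS //.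
      have := none x; rewrite /= xS /= => /negbFE /eqP <-.
      by move/agreeP: ag => <- //; rewrite inE xS.
    by rewrite es et.
exists (fun s t : cfg d => ent X (mix S s c) (mix S t c)); split.
- move=> s t s' t' /agreeP h1 /agreeP h2.
  congr (ent X _ _); apply/ffunP => x; rewrite !mixE; case: ifP => xS //.
    exact: h1.
  exact: h2.
- move=> s t; case: ifP => ag; first exact: (claim _ s t (leqnn _) ag).
  move/negbT: ag => /forall_inPn [y]; rewrite inE => yS ne.
  exact: (F1 y s t yS ne).
Qed.

Lemma supp_comm_single {V : finType} {d : V -> nat} {R : realType} (O : op d R) (S : {set V}) :
  supported O S -> forall y, y \notin S -> forall Z, supported Z [set y] ->
  O *m Z = Z *m O.
Proof.
move=> hO y yS Z hZ; apply: (supp_disj_comm hO hZ).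
by rewrite disjoint_sym disjoints1.
Qed.

Lemma supp_of_comm {V : finType} {d : V -> nat} {R : realType}
  (hd : forall x, (0 < d x)%N) (O : op d R) (S : {set V}) :
  (forall y, y \notin S -> forall Z, supported Z [set y] -> O *m Z = Z *m O) ->
  supported O S.
Proof. by move=> H; apply: (commutant hd) => y yS p q; exact: (H y yS _ (E_supp y p q)). Qed.

Lemma supp_mul {V : finType} {d : V -> nat} {R : realType}
  (hd : forall x, (0 < d x)%N) (X Y : op d R) (S : {set V}) :
  supported X S -> supported Y S -> supported (X *m Y) S.
Proof.
move=> hX hY; apply: (supp_of_comm hd) => y yS Z hZ.
by rewrite -mulmxA (supp_comm_single hY yS hZ) !mulmxA (supp_comm_single hX yS hZ).
Qed.

Lemma supp_lin {V : finType} {d : V -> nat} {R : realType}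
  (hd : forall x, (0 < d x)%N) a (X Y : op d R) (S : {set V}) :
  supported X S -> supported Y S -> supported (a *: X + Y) S.
Proof.
move=> hX hY; apply: (supp_of_comm hd) => y yS Z hZ.
by rewrite mulmxDl mulmxDr -scalemxAl -scalemxAr (supp_comm_single hY yS hZ)
  (supp_comm_single hX yS hZ).
Qed.

Lemma supp_sub {V : finType} {d : V -> nat} {R : realType}
  (hd : forall x, (0 < d x)%N) (X Y : op d R) (S : {set V}) :
  supported X S -> supported Y S -> supported (X - Y) S.
Proof.
move=> hX hY; apply: (supp_of_comm hd) => y yS Z hZ.
by rewrite mulmxBl mulmxBr (supp_comm_single hY yS hZ) (supp_comm_single hX yS hZ).
Qed.

Lemma supp_1 {V : finType} {d : V -> nat} {R : realType}
  (hd : forall x, (0 < d x)%N) (S : {set V}) :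
  supported (1%:M : op d R) S.
Proof. by apply: (supp_of_comm hd) => y yS Z hZ; rewrite mul1mx mulmx1. Qed.

Lemma supp_mono {V : finType} {d : V -> nat} {R : realType}
  (hd : forall x, (0 < d x)%N) (X : op d R) (S S' : {set V}) :
  S \subset S' -> supported X S -> supported X S'.
Proof.
move=> sub hX; apply: (supp_of_comm hd) => y yS Z hZ.
apply: (supp_comm_single hX) hZ.
by apply: contra yS; apply: (subsetP sub).
Qed.

Lemma schmidt {V : finType} {d : V -> nat} {R : realType} (T : {set V}) k
  (A : 'I_k -> R[i]) (C D : 'I_k -> op d R) :
  (forall b, supported (C b) (~: T)) -> (forall b, supported (D b) T) ->
  (forall b b', hs (D b) (D b') = (b == b')%:R) ->
  \sum_(b < k) A b *: (C b *m D b) = 0 -> forall b, A b *: C b = 0.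
Proof.
move=> hC hD orth H b0.
apply: ent_ext => s t; rewrite ent_scale ent0.
pose g b := ent (C b) (mix (~: T) s s) (mix (~: T) t s).
have gconst : forall b u, ent (C b) (mix (~: T) s u) (mix (~: T) t u) = g b.
  move=> b u; case: (hC b) => [AC [eC eqC]]; rewrite /g !eqC setCK.
  have a1 : agree T (mix (~: T) s u) (mix (~: T) t u).
    by apply/agreeP => x xT; rewrite !mixE inE xT.
  have a2 : agree T (mix (~: T) s s) (mix (~: T) t s).
    by apply/agreeP => x xT; rewrite !mixE inE xT.
  rewrite a1 a2; apply: eC; apply/agreeP => x xT; by rewrite !mixE xT.
have dis : [disjoint ~: T & T] by rewrite disjoints_subset subxx.
have key : forall u v, \sum_(b < k) A b * g b *
    ent (D b) (mix (~: T) t u) (mix (~: T) t v) = 0.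
  move=> u v; have := congr1 (fun M => ent M (mix (~: T) s u) (mix (~: T) t v)) H.
  rewrite /= ent_sum ent0 => h; rewrite -[RHS]h; apply: eq_bigr => b _.
  rewrite ent_scale (ent_mul_disj _ _ (hC b) (hD b) dis).
  have -> : mix (~: T) (mix (~: T) t v) (mix (~: T) s u) = mix (~: T) t u.
    by apply/ffunP => x; rewrite !mixE; case: (x \in ~: T).
  by rewrite gconst mulrA.
have hs_b : forall b, \sum_(u : cfg d) \sum_(v : cfg d) (ent (D b0) u v)^* *
    ent (D b) (mix (~: T) t u) (mix (~: T) t v) = (b0 == b)%:R.
  move=> b; rewrite -orth hs_sum; apply: eq_bigr => u _; apply: eq_bigr => v _.
  case: (hD b0) => [A0 [_ e0]]; case: (hD b) => [Ab [eb eqb]].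
  rewrite e0 !eqb; case: ifP => ag; last by rewrite conjC0 !mul0r.
  have ag2 : agree (~: T) (mix (~: T) t u) (mix (~: T) t v).
    by apply/agreeP => x xT; rewrite !mixE xT.
  rewrite ag2; congr (_ * _); apply: eb; apply/agreeP => x xT;
    by rewrite mixE inE xT.
have E0 : \sum_(u : cfg d) \sum_(v : cfg d) (ent (D b0) u v)^* *
    (\sum_(b < k) A b * g b * ent (D b) (mix (~: T) t u) (mix (~: T) t v)) = 0.
  by rewrite big1 // => u _; rewrite big1 // => v _; rewrite key mulr0.
have E1 : \sum_(u : cfg d) \sum_(v : cfg d) (ent (D b0) u v)^* *
    (\sum_(b < k) A b * g b * ent (D b) (mix (~: T) t u) (mix (~: T) t v)) =
    \sum_(b < k) A b * g b * (b0 == b)%:R.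
  under eq_bigr => u _ do under eq_bigr => v _ do rewrite mulr_sumr.
  under eq_bigr => u _ do rewrite exchange_big.
  rewrite exchange_big; apply: eq_bigr => b _.
  rewrite -hs_b mulr_sumr; apply: eq_bigr => u _.
  rewrite mulr_sumr; apply: eq_bigr => v _.
  by rewrite mulrCA.
have Ag : A b0 * g b0 = 0.
  rewrite -E0 E1 (bigD1 b0) //= eqxx mulr1 big1 ?addr0 // => b nb.
  by rewrite eq_sym (negbTE nb) mulr0.
case: (boolP (agree T s t)) => ag.
  have -> : ent (C b0) s t = g b0.
    rewrite /g mixss; congr (ent _ _ _); apply/ffunP => x; rewrite mixE.
    case: ifP => //; rewrite inE => /negbFE xT.
    by move/agreeP: ag => ->.
  exact: Ag.
case: (hC b0) => [AC [_ eqC]]; by rewrite eqC setCK (negbTE ag) mulr0.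
Qed.

Lemma ball_refl {V : finType} (e : rel V) n x : x \in ball e n x.
Proof. by elim: n => [|n IH] /=; rewrite ?inE ?IH. Qed.

Lemma ball_trans {V : finType} (e : rel V) m n x y z :
  z \in ball e m y -> y \in ball e n x -> z \in ball e (n + m) x.
Proof.
elim: m z => [|m IH] z /=.
  by rewrite inE addn0 => /eqP ->.
rewrite inE => /orP [h|]; rewrite addnS /= inE.
  by move=> hy; rewrite (IH z h hy).
move=> /exists_inP [w wB ewz] hy; rewrite !inE; apply/orP; right.
by apply/exists_inP; exists w => //; apply: IH.
Qed.

Lemma ball_sym {V : finType} (e : rel V) : symmetric e ->
  forall n x y, y \in ball e n x -> x \in ball e n y.
Proof.
move=> sym; elim=> [|n IH] x y /=.
  by rewrite !inE eq_sym.
rewrite !inE => /orP [h|/exists_inP [w wB ewy]].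
  by rewrite (IH _ _ h).
have h1 : x \in ball e n w by apply: IH.
have h2 : w \in ball e 1 y.
  rewrite /= !inE; apply/orP; right; apply/exists_inP; exists y.
    by rewrite inE.
  by rewrite sym.
by have := ball_trans h1 h2; rewrite add1n /= !inE.
Qed.

Lemma geometric {V : finType} (e : rel V) (r : nat) (T1 T2 : {set V}) :
  symmetric e -> setdist_gt e (2 * r) T1 T2 ->
  forall y, [disjoint ball e r y & T1] || [disjoint ball e r y & T2].
Proof.
move=> sym hdist y.
case: (boolP [disjoint ball e r y & T1]) => //= h1.
move: h1; rewrite disjoints_subset => /subsetPn [x1 x1B]; rewrite inE negbK => x1T.
rewrite disjoints_subset; apply/subsetP => x2 x2B; rewrite inE; apply/negP => x2T.
move/forall_inP: hdist => /(_ x1 x1T) /forall_inP /(_ x2 x2T).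
have := ball_trans x2B (ball_sym sym x1B).
by rewrite mul2n -addnn => ->.
Qed.

Lemma keycomm {V : finType} {d : V -> nat} {R : realType}
  (hd : forall x, (0 < d x)%N) (O : op d R) (T1 T2 : {set V}) k
  (A : 'I_k -> R[i]) (P1 P2 : 'I_k -> op d R) (Z : op d R) (B : {set V}) :
  [disjoint T1 & T2] -> [disjoint B & T1] || [disjoint B & T2] ->
  (forall b, A b != 0) -> (forall b b', hs (P2 b) (P2 b') = (b == b')%:R) ->
  (forall b, supported (P1 b) T1) -> (forall b, supported (P2 b) T2) ->
  O = \sum_(b < k) A b *: (P1 b *m P2 b) ->
  supported Z B -> O *m Z = Z *m O ->
  forall b, P1 b *m Z = Z *m P1 b.
Proof.
move=> dis /orP [dB|dB] hA orth hP1 hP2 hO hZ hOZ b.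
  by apply: supp_disj_comm (hP1 b) hZ _; rewrite disjoint_sym.
pose C b := P1 b *m Z - Z *m P1 b.
have hC : forall b, supported (C b) (~: T2).
  move=> b'; apply: (supp_sub hd); apply: (supp_mul hd).
  - by apply: (supp_mono hd) (hP1 b'); rewrite -disjoints_subset.
  - by apply: (supp_mono hd) hZ; rewrite -disjoints_subset.
  - by apply: (supp_mono hd) hZ; rewrite -disjoints_subset.
  - by apply: (supp_mono hd) (hP1 b'); rewrite -disjoints_subset.
have comm2 : forall b, P2 b *m Z = Z *m P2 b.
  by move=> b'; apply: supp_disj_comm (hP2 b') hZ _; rewrite disjoint_sym.
have sum0 : \sum_(b < k) A b *: (C b *m P2 b) = 0.
  have : O *m Z - Z *m O = 0 by rewrite hOZ subrr.
  rewrite hO mulmx_suml mulmx_sumr -sumrB => h; rewrite -[RHS]h.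
  apply: eq_bigr => b' _.
  rewrite /C mulmxBl -scalemxAl -scalemxAr -scalerBr; congr (_ *: _).
  by rewrite -!mulmxA comm2 !mulmxA.
have := schmidt hC hP2 orth sum0 b.
move/eqP; rewrite scaler_eq0 (negbTE (hA b)) /= subr_eq0 => /eqP.
by [].
Qed.

Lemma factor_in_P {V : finType} (e : rel V) {d : V -> nat} {R : realType}
  (r : nat) (alpha : op d R -> op d R) (F : {set V})
  (hd : forall x, (0 < d x)%N) (hQ : QCA e r alpha) (O : op d R)
  (T1 T2 : {set V}) k (A : 'I_k -> R[i]) (P1 P2 : 'I_k -> op d R) :
  Palg e r alpha F O -> [disjoint T1 & T2] ->
  (forall y, [disjoint ball e r y & T1] || [disjoint ball e r y & T2]) ->
  (forall b, A b != 0) -> (forall b b', hs (P2 b) (P2 b') = (b == b')%:R) ->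
  (forall b, supported (P1 b) T1) -> (forall b, supported (P2 b) T2) ->
  O = \sum_(b < k) A b *: (P1 b *m P2 b) ->
  forall b, Palg e r alpha F (P1 b).
Proof.
move=> PO dis geo hA orth hP1 hP2 hO b.
case: hQ => [[lin mul adjp [g gK Kg]] loc].
case: PO => [[O' [hO' aO']] cO].
split.
- exists (g (P1 b)); split; last by rewrite Kg.
  apply: (supp_of_comm hd) => y yF Z hZ.
  apply: (can_inj gK); rewrite !mul Kg.
  apply: (keycomm hd dis (geo y) hA orth hP1 hP2 hO (loc y Z hZ)).
  rewrite -aO' -!mul; congr alpha; exact: (supp_comm_single hO' yF hZ).
- move=> Q hQ'.
  have s1 : supported (P1 b) (~: interior e r F).
    apply: (supp_of_comm hd) => y; rewrite inE negbK => yI Z hZ.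
    apply: (keycomm hd dis _ hA orth hP1 hP2 hO hZ).
      have := geo y; case/orP => h; apply/orP; [left|right];
        by apply: disjointWl h; rewrite sub1set ball_refl.
    apply: cO; apply: (supp_mono hd) hZ; by rewrite sub1set.
  by apply: supp_disj_comm s1 hQ' _; rewrite disjoints_subset subxx.
Qed.

Lemma alpha1 {V : finType} {d : V -> nat} {R : realType} (alpha : op d R -> op d R) :
  star_aut alpha -> alpha 1%:M = 1%:M.
Proof.
case=> lin mul _ [g gK Kg].
have h : forall Z : op d R, alpha 1%:M *m Z = Z by move=> Z; rewrite -(Kg Z) -mul mul1mx.
by rewrite -[alpha 1%:M]mulmx1 h.
Qed.

Theorem mainTheorem18 (V : finType) (e : rel V) (d : V -> nat) (R : realType)
  (r : nat) (alpha : op d R -> op d R) (F : {set V}) :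
  irreflexive e -> symmetric e ->
  (forall x, 0 < d x)%N ->
  QCA e r alpha ->
  is_algebra (Palg e r alpha F) /\
  locally_factorizable e (2 * r) (Palg e r alpha F).
Proof.
move=> irr sym hd hQ; split.
- have [[lin mul adjp bij] loc] := hQ; split.
  + split; first by exists 1%:M; split; [exact: (supp_1 (R:=R) hd F) | apply: alpha1; case: hQ].
    by move=> Q _; rewrite mul1mx mulmx1.
  + move=> a X Y [[OX [hX aX]] cX] [[OY [hY aY]] cY]; split.
      by exists (a *: OX + OY); split; [exact: supp_lin | rewrite lin aX aY].
    move=> Q hQ'; by rewrite mulmxDl mulmxDr -scalemxAl -scalemxAr cX // cY.
  + move=> X Y [[OX [hX aX]] cX] [[OY [hY aY]] cY]; split.
      by exists (OX *m OY); split; [exact: supp_mul | rewrite mul aX aY].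
    move=> Q hQ'; by rewrite -mulmxA cY // mulmxA cX // -mulmxA.
- move=> O PO T1 T2 dis dist _ k A O1 O2 Apos orth1 orth2 s1 s2 hO b.
  have geo := geometric sym dist.
  have hA : forall b, A b != 0 by move=> b'; apply: lt0r_neq0.
  split; first exact: (factor_in_P hd hQ PO dis geo hA orth2 s1 s2 hO).
  apply: (factor_in_P hd hQ PO _ _ hA orth1 s2 s1).
  - by rewrite disjoint_sym.
  - by move=> y; rewrite orbC.
  - rewrite hO; apply: eq_bigr => b' _; congr (_ *: _).
    exact: (supp_disj_comm (s1 b') (s2 b') dis).
Qed.
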